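(* Let $A=(a_{i,j})$ be a symmetric $n\times n$ matrix with nonnegative entries whose associated undirected graph on $\{1,\dots,n\}$ (edge $\{i,j\}$ present iff $a_{i,j}>0$, self-loops allowed) is connected, let $\deg(i)=\sum_{j=1}^n a_{i,j}>0$, and let $\gamma_1,\dots,\gamma_n>0$. Let $\beta^*\in[0,1]^n$ be an equilibrium point, i.e. $F(\beta^* )=\beta^*$. If $\beta_i^*=0$ for some $i$, then $\beta_i^*=0$ for all $i$; likewise, if $\beta_i^*=1$ for some $i$, then $\beta_i^*=1$ for all $i$.
   Context: For $\mu\in[0,1]$ and $\gamma>0$ define $f(\mu,\gamma)=\dfrac{\gamma\mu}{1+(\gamma-1)\mu}$. For $\beta\in[0,1]^n$ let $\mu_i(\beta)=\frac{1}{\deg(i)}\sum_{j=1}^n a_{i,j}\beta_j$ and define $F:[0,1]^n\to[0,1]^n$ by $F_i(\beta)=f(\mu_i(\beta),\gamma_i)$. A point $\beta$ with $F(\beta)=\beta$ is called an equilibrium point. *)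

(* Defs.v *)
From mathcomp Require Import all_boot all_order all_algebra.
Set Implicit Arguments. Unset Strict Implicit. Unset Printing Implicit Defensive.
Import Order.TTheory GRing.Theory Num.Theory.
Local Open Scope ring_scope.

Definition f_eq (R : realFieldType) (mu gamma : R) : R :=
  gamma * mu / (1 + (gamma - 1) * mu).

Definition deg (R : realFieldType) (n : nat) (A : 'M[R]_n) (i : 'I_n) : R :=
  \sum_(j < n) A i j.

Definition mu (R : realFieldType) (n : nat) (A : 'M[R]_n) (beta : 'I_n -> R)
  (i : 'I_n) : R :=
  (deg A i)^-1 * \sum_(j < n) A i j * beta j.

Definition F (R : realFieldType) (n : nat) (A : 'M[R]_n) (gamma : 'I_n -> R)
  (beta : 'I_n -> R) (i : 'I_n) : R :=
  f_eq (mu A beta i) (gamma i).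

Definition adj (R : realFieldType) (n : nat) (A : 'M[R]_n) : rel 'I_n :=
  fun i j => 0 < A i j.

Definition graph_connected (R : realFieldType) (n : nat) (A : 'M[R]_n) : Prop :=
  forall i j : 'I_n, connect (adj A) i j.

(* Main.v *)
Require Import Defs.
From mathcomp Require Import all_boot all_order all_algebra.
From mathcomp Require Import ring lra.
Import Order.TTheory GRing.Theory Num.Theory.
Local Open Scope ring_scope.

Lemma propag (n : nat) (e : rel 'I_n) (P : 'I_n -> Prop) :
  (forall x y, P x -> e x y -> P y) ->
  forall x y, connect e x y -> P x -> P y.
Proof.
move=> step x y /connectP [p]; elim: p x => [|z p IH] x /=.
  by move=> _ ->.
move=> /andP [exz pz] ey Px; apply: (IH z pz ey); exact: step Px exz.
Qed.

Lemma sum0_each (R : realFieldType) (n : nat) (a b : 'I_n -> R) :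
  (forall j, 0 <= a j) -> (forall j, 0 <= b j) ->
  \sum_(j < n) a j * b j = 0 -> forall j, 0 < a j -> b j = 0.
Proof.
move=> ha hb hs j aj.
have := @psumr_eq0P R _ xpredT (fun j => a j * b j).
move=> /(_ (fun k _ => mulr_ge0 (ha k) (hb k)) hs j isT) /eqP.
by rewrite mulf_eq0 (gt_eqF aj) /= => /eqP.
Qed.

Theorem lemma1 (R : realFieldType) (n : nat) (A : 'M[R]_n) (gamma : 'I_n -> R)
  (beta : 'I_n -> R) :
  A^T = A ->
  (forall i j, 0 <= A i j) ->
  graph_connected A ->
  (forall i, 0 < deg A i) ->
  (forall i, 0 < gamma i) ->
  (forall i, 0 <= beta i <= 1) ->
  (forall i, F A gamma beta i = beta i) ->
  ((exists i, beta i = 0) -> forall i, beta i = 0) /\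
  ((exists i, beta i = 1) -> forall i, beta i = 1).
Proof.
move=> _ Apos conn degp gp bb hfix.
have S_ge0 i : 0 <= \sum_(j < n) A i j * beta j.
  by apply: sumr_ge0 => j _; apply: mulr_ge0 => //; case/andP: (bb j).
have S_le i : \sum_(j < n) A i j * beta j <= deg A i.
  rewrite /deg; apply: ler_sum => j _.
  have := Apos i j; case/andP: (bb j) => _ b1 a0.
  by rewrite -[leRHS]mulr1; apply: ler_wpM2l.
have mu01 i : 0 <= mu A beta i <= 1.
  have dp := degp i; rewrite /mu; apply/andP; split.
    by apply: mulr_ge0 => //; rewrite invr_ge0 ltW.
  by rewrite mulrC ler_pdivrMr // mul1r.
have den i : 0 < 1 + (gamma i - 1) * mu A beta i.
  have := mu01 i; have := gp i; move=> g /andP [m0 m1].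
  have -> : 1 + (gamma i - 1) * mu A beta i =
            (1 - mu A beta i) + gamma i * mu A beta i by ring.
  have : 0 <= gamma i * mu A beta i by apply: mulr_ge0 => //; exact: ltW.
  case: (ltrP (mu A beta i) 1) => h; first lra.
  have -> : mu A beta i = 1 by apply/eqP; rewrite eq_le m1 h.
  by rewrite subrr add0r mulr1.
have muE i : mu A beta i * deg A i = \sum_(j < n) A i j * beta j.
  by rewrite /mu mulrC mulrA mulfV ?mul1r // gt_eqF.
split.
- move=> [i0 h0] i; apply: (@propag n (adj A) (fun k => beta k = 0) _ i0 i (conn i0 i) h0).
  move=> x y bx axy.
  have := hfix x; rewrite /F /f_eq bx => /eqP.
  rewrite mulf_eq0 invr_eq0 (gt_eqF (den x)) orbF mulf_eq0 (gt_eqF (gp x)) /=.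
  move=> /eqP m0.
  have hs : \sum_(j < n) A x j * beta j = 0 by rewrite -muE m0 mul0r.
  apply: (@sum0_each R n (A x)) hs y axy => // j; by case/andP: (bb j).
- move=> [i0 h0] i; apply: (@propag n (adj A) (fun k => beta k = 1) _ i0 i (conn i0 i) h0).
  move=> x y bx axy.
  have := hfix x; rewrite /F /f_eq bx => /(congr1 (fun t => t * (1 + (gamma x - 1) * mu A beta x))).
  rewrite divfK ?(gt_eqF (den x)) // mul1r => h.
  have m1 : mu A beta x = 1.
    move: h; set m := mu A beta x; move=> h.
    apply/eqP; rewrite -subr_eq0; apply/eqP.
    have -> : m - 1 = gamma x * m - (1 + (gamma x - 1) * m) by ring.
    by rewrite h subrr.
  have hs : \sum_(j < n) A x j * (1 - beta j) = 0.
    rewrite (eq_bigr (fun j => A x j - A x j * beta j)); last by move=> j _; ring.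
    by rewrite sumrB -muE m1 mul1r /deg subrr.
  apply/eqP; rewrite eq_sym -subr_eq0; apply/eqP.
  apply: (@sum0_each R n (A x)) hs y axy => // j; case/andP: (bb j) => _ ?; lra.
Qed.
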